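(* Let the unperturbed dynamics (rates $W$) on the finite set $K$ be irreducible with unique stationary distribution $\rho$. For functions $V,M:K\to\mathbb{R}$, constants $a,b\in\mathbb{R}$ and small $h\in\mathbb{R}$, let $\rho^V=\rho^V_{h}$ be the unique stationary distribution of the dynamics with rates $W(x,y)e^{h(bV(y)-aV(x))}$, and let $\rho^M$ be the unique stationary distribution of the dynamics with rates $W(x,y)e^{h(aM(y)-bM(x))}$ (roles of $a$ and $b$ interchanged). Define \[ \chi^{ab}_{MV}=\frac{d}{dh}\Big|_{h=0}\sum_x\rho^V(x)\,LM(x),\qquad \chi^{ba}_{VM}=\frac{d}{dh}\Big|_{h=0}\sum_x\rho^M(x)\,LV(x). \] Then \[ \chi^{ab}_{MV}=\chi^{ba}_{VM}=b\,\langle M\,LV\rangle_\rho+a\,\langle V\,LM\rangle_\rho, \] where $\langle F\rangle_\rho=\sum_x\rho(x)F(x)$.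
   Context: $W(x,y)\ge0$ ($x\ne y\in K$) are transition rates on a finite set $K$ and $Lf(x)=\sum_yW(x,y)[f(y)-f(x)]$ is the backward generator of the unperturbed dynamics. *)

(* Defs.v *)
From Stdlib Require Export Reals Relation_Operators.
From mathcomp Require Export all_boot.
Set Implicit Arguments. Unset Strict Implicit. Unset Printing Implicit Defensive.
Open Scope R_scope.

Definition sumK (K : finType) (f : K -> R) : R := \big[Rplus/0]_(x : K) f x.

Definition gen (K : finType) (W : K -> K -> R) (f : K -> R) (x : K) : R :=
  \big[Rplus/0]_(y in predC1 x) (W x y * (f y - f x)).

Definition rates (K : finType) (W : K -> K -> R) : Prop :=
  forall x y : K, x <> y -> 0 <= W x y.

Definition irreducible (K : finType) (W : K -> K -> R) : Prop :=
  forall x y : K, clos_refl_trans K (fun u v => u <> v /\ 0 < W u v) x y.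

Definition stationary (K : finType) (W : K -> K -> R) (p : K -> R) : Prop :=
  (forall x, 0 <= p x) /\ sumK p = 1 /\
  forall y : K, \big[Rplus/0]_(x in predC1 y) (p x * W x y - p y * W y x) = 0.

Definition expect (K : finType) (rho F : K -> R) : R := sumK (fun x => rho x * F x).

Definition pert (K : finType) (W : K -> K -> R) (c d : R) (F : K -> R) (h : R)
  : K -> K -> R := fun x y => W x y * exp (h * (c * F y - d * F x)).

(* Main.v *)
Set Warnings "-notation-overridden -redundant-canonical-projection".
Require Import Defs.
From HB Require Import structures.
From Stdlib Require Import Reals Lra Relation_Operators Operators_Properties FunctionalExtensionality.
From mathcomp Require Import all_boot.
Open Scope R_scope.
Set Implicit Arguments. Unset Strict Implicit. Unset Printing Implicit Defensive.

HB.instance Definition _ := Monoid.isComLaw.Build R 0 Rplus (fun x y z => esym (Rplus_assoc x y z)) Rplus_comm Rplus_0_l.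
HB.instance Definition _ := Monoid.isComLaw.Build R 1 Rmult (fun x y z => esym (Rmult_assoc x y z)) Rmult_comm Rmult_1_l.
Lemma R0mul : left_zero 0 Rmult. Proof. move=> x; ring. Qed.
Lemma Rmul0 : right_zero 0 Rmult. Proof. move=> x; ring. Qed.
HB.instance Definition _ := Monoid.isMulLaw.Build R 0 Rmult R0mul Rmul0.
Lemma RDl : left_distributive Rmult Rplus. Proof. move=> x y z; ring. Qed.
Lemma RDr : right_distributive Rmult Rplus. Proof. move=> x y z; ring. Qed.
HB.instance Definition _ := Monoid.isAddLaw.Build R Rmult Rplus RDl RDr.


Notation "'SUM_' ( x <- r | P ) F" := (\big[Rplus/0]_(x <- r | P) F) (at level 41, x, r, P at level 50, only parsing).

Lemma sum_ge0 (I : Type) (r : seq I) (P : pred I) (F : I -> R) :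
  (forall i, P i -> 0 <= F i) -> 0 <= \big[Rplus/0]_(i <- r | P i) F i.
Proof. move=> H; apply: (big_ind (fun v => 0 <= v)) => //; [lra | move=> *; lra]. Qed.

Lemma sum_le (I : Type) (r : seq I) (P : pred I) (F G : I -> R) :
  (forall i, P i -> F i <= G i) ->
  \big[Rplus/0]_(i <- r | P i) F i <= \big[Rplus/0]_(i <- r | P i) G i.
Proof. move=> H; apply: (big_ind2 (fun u v => u <= v)) => //; [lra | move=> *; lra]. Qed.

Lemma term_le_sum (I : finType) (j : I) (P : pred I) (F : I -> R) :
  (forall i, P i -> 0 <= F i) -> P j -> F j <= \big[Rplus/0]_(i | P i) F i.
Proof.
move=> H Pj; rewrite (bigD1 j) //=.
have : 0 <= \big[Rplus/0]_(i | P i && (i != j)) F i.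
  by apply: sum_ge0 => i /andP [Pi _]; apply: H.
lra.
Qed.

Lemma sum_opp (I : Type) (r : seq I) (P : pred I) (F : I -> R) :
  \big[Rplus/0]_(i <- r | P i) (- F i) = - \big[Rplus/0]_(i <- r | P i) F i.
Proof.
apply: (big_ind2 (fun u v => u = - v)) => //; [lra | move=> *; subst; lra].
Qed.

Lemma sum_sub (I : Type) (r : seq I) (P : pred I) (F G : I -> R) :
  \big[Rplus/0]_(i <- r | P i) (F i - G i) =
  \big[Rplus/0]_(i <- r | P i) F i - \big[Rplus/0]_(i <- r | P i) G i.
Proof. rewrite /Rminus big_split /= sum_opp //. Qed.

Lemma sum_mull (I : Type) (r : seq I) (P : pred I) (a : R) (F : I -> R) :
  \big[Rplus/0]_(i <- r | P i) (a * F i) = a * \big[Rplus/0]_(i <- r | P i) F i.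
Proof. by rewrite big_distrr. Qed.

Lemma sum_ext (I : Type) (r : seq I) (P : pred I) (F G : I -> R) :
  (forall i, P i -> F i = G i) ->
  \big[Rplus/0]_(i <- r | P i) F i = \big[Rplus/0]_(i <- r | P i) G i.
Proof. move=> H; exact: eq_bigr. Qed.

Lemma balance (K : finType) (W : K -> K -> R) (p : K -> R) :
  stationary W p -> forall x,
  \big[Rplus/0]_(u in predC1 x) (p u * W u x) = p x * \big[Rplus/0]_(u in predC1 x) W x u.
Proof.
move=> [_ [_ H]] x; move: (H x); rewrite sum_sub -sum_mull; lra.
Qed.

Lemma stat_gen (K : finType) (W : K -> K -> R) (p : K -> R) :
  stationary W p -> forall G, sumK (fun x => p x * gen W G x) = 0.
Proof.
move=> [_ [_ H]] G.
have E : \big[Rplus/0]_(y : K) \big[Rplus/0]_(x : K)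
     (if x != y then G y * (p x * W x y - p y * W y x) else 0) = 0.
  rewrite (eq_bigr (fun _ => 0)) ?big1_eq // => y _.
  by rewrite -big_mkcond /= sum_mull H; ring.
rewrite -E /sumK /gen.
transitivity (\big[Rplus/0]_(x : K) \big[Rplus/0]_(y : K)
   (if x != y then p x * W x y * (G y - G x) else 0)).
  apply: eq_bigr => x _; rewrite -sum_mull big_mkcond /=.
  by apply: eq_bigr => y _; rewrite !inE eq_sym; case: (x != y) => //; ring.
transitivity (\big[Rplus/0]_(x : K) \big[Rplus/0]_(y : K)
   (if x != y then G y * (p x * W x y) else 0) -
   \big[Rplus/0]_(x : K) \big[Rplus/0]_(y : K)
   (if y != x then G x * (p x * W x y) else 0)).
  rewrite -sum_sub; apply: eq_bigr => x _; rewrite -sum_sub; apply: eq_bigr => y _.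
  by case: (eqVneq x y) => [->|ne] /=; ring.
rewrite [X in X - _]exchange_big /= -sum_sub; apply: eq_bigr => y _; rewrite -sum_sub.
apply: eq_bigr => x _; case: (x != y); ring.
Qed.

Definition edge (K : finType) (W : K -> K -> R) := fun u v : K => u <> v /\ 0 < W u v.

Lemma in_predC1 (K : finType) (u x : K) : u <> x -> u \in predC1 x.
Proof. by move=> H; rewrite inE; apply/eqP. Qed.

Lemma zero_prop (K : finType) (W : K -> K -> R) (q : K -> R) x u :
  rates W -> (forall z, 0 <= q z) ->
  \big[Rplus/0]_(v in predC1 x) (q v * W v x) = q x * \big[Rplus/0]_(v in predC1 x) W x v ->
  q x = 0 -> u <> x -> 0 < W u x -> q u = 0.
Proof.
move=> HW Hq Hb Hx Hux HWu.
have H1 : q u * W u x <= \big[Rplus/0]_(v in predC1 x) (q v * W v x).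
  apply: (@term_le_sum K u (fun v => v \in predC1 x) (fun v => q v * W v x)); last exact: in_predC1.
  move=> i; rewrite inE => /eqP Hi; apply: Rmult_le_pos; [exact: Hq | exact: HW].
rewrite Hb Hx in H1. have := Hq u. nra.
Qed.

Lemma reach_zero (K : finType) (W : K -> K -> R) (q : K -> R) u y :
  rates W -> (forall z, 0 <= q z) ->
  (forall x, \big[Rplus/0]_(v in predC1 x) (q v * W v x) = q x * \big[Rplus/0]_(v in predC1 x) W x v) ->
  clos_refl_trans_1n K (edge W) u y -> q y = 0 -> q u = 0.
Proof.
move=> HW Hq Hb; elim => [//|a b c [Hab HWab] _ IH] Hc.
exact: (zero_prop HW Hq (Hb b) (IH Hc) Hab HWab).
Qed.

Lemma stat_pos (K : finType) (W : K -> K -> R) (rho : K -> R) :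
  rates W -> irreducible W -> stationary W rho -> forall x, 0 < rho x.
Proof.
move=> HW Hirr Hs x.
have [Hn [Hsum _]] := Hs.
case: (Rle_lt_or_eq_dec 0 (rho x) (Hn x)) => // H0.
exfalso.
have Hall : forall u, rho u = 0.
  move=> u; apply: (reach_zero HW Hn (balance Hs)) (esym H0).
  exact: clos_rt_rt1n (Hirr u x).
move: Hsum; rewrite /sumK big1 => [|u _]; [lra | exact: Hall].
Qed.

Lemma argmax (K : finType) (f : K -> R) (y0 : K) : exists y, forall x, f x <= f y.
Proof.
suff [y Hy] : exists y, forall x, x \in enum K -> f x <= f y.
  by exists y => x; apply: Hy; rewrite mem_enum.
elim: (enum K) => [|a s [y Hy]]; first by exists y0.
case: (Rle_lt_dec (f a) (f y)) => Hay.
- exists y => x; rewrite inE => /orP [/eqP -> //|]; exact: Hy.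
- exists a => x; rewrite inE => /orP [/eqP -> |Hx]; first lra.
  have := Hy x Hx; lra.
Qed.

Lemma path_bound (K : finType) (W : K -> K -> R) (rho : K -> R) (A : K -> K -> R) u y :
  (forall a b, edge W a b -> 0 <= A a b) -> (forall b, 0 < rho b) ->
  clos_refl_trans_1n K (edge W) u y ->
  exists C, 0 <= C /\ forall (D : K -> R) e, (forall z, 0 <= D z) -> 0 <= e ->
   (forall a b, edge W a b -> D a <= A a b * (D b + e / rho b)) -> D u <= C * (D y + e).
Proof.
move=> HA Hrho; elim => [x|a b c Hab _ [C [HC IH]]].
  by exists 1; split => [|D e HD He _]; [lra | have := HD x; lra].
exists (A a b * C + A a b * / rho b); split.
  have := HA a b Hab; have := Rinv_0_lt_compat _ (Hrho b); nra.
move=> D e HD He Hed.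
have H1 := Hed a b Hab. have H2 := IH D e HD He Hed.
have Hk := HA a b Hab. have Hm := Rinv_0_lt_compat _ (Hrho b).
have HDc := HD c.
have H3 : A a b * (D b + e / rho b) <= A a b * (C * (D c + e) + e / rho b).
  apply: Rmult_le_compat_l => //; lra.
have H4 : 0 <= A a b * / rho b * D c.
  apply: Rmult_le_pos => //; apply: Rmult_le_pos => //; lra.
rewrite /Rdiv in H3. nra.
Qed.

Lemma sum1 (K : finType) (p : K -> R) (x : K) :
  (forall z, 0 <= p z) -> sumK p = 1 -> p x <= 1.
Proof.
move=> Hp Hs; rewrite -Hs /sumK.
exact: (@term_le_sum K x (fun _ => true) p).
Qed.

Lemma stab (K : finType) (W : K -> K -> R) (rho : K -> R) :
  rates W -> irreducible W -> stationary W rho ->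
  exists Cs, 0 <= Cs /\ forall t (W' : K -> K -> R) p, 1 <= t ->
    (forall x y, x <> y -> W x y / t <= W' x y <= t * W x y) ->
    stationary W' p -> forall x, Rabs (p x - rho x) <= Cs * (1 - / (t * t)).
Proof.
move=> HW Hirr Hs.
have Hpos := stat_pos HW Hirr Hs.
pose S b := \big[Rplus/0]_(u in predC1 b) (rho u * W u b).
have HS : forall b, 0 <= S b.
  move=> b; apply: sum_ge0 => i; rewrite inE => /eqP Hi.
  apply: Rmult_le_pos; [have := Hpos i; lra | exact: HW].
pose A a b := S b / (rho a * W a b).
have HA : forall a b, edge W a b -> 0 <= A a b.
  move=> a b [Hab HWab]; rewrite /A /Rdiv; apply: Rmult_le_pos => //.
  apply: Rlt_le; apply: Rinv_0_lt_compat; have := Hpos a; nra.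
have Hex : forall u y, exists C, 0 <= C /\ forall (D : K -> R) e, (forall z, 0 <= D z) -> 0 <= e ->
   (forall a b, edge W a b -> D a <= A a b * (D b + e / rho b)) -> D u <= C * (D y + e).
  move=> u y; apply: (path_bound HA Hpos); exact: clos_rt_rt1n (Hirr u y).
have [C HC] : exists C : K -> K -> R, forall u y, 0 <= C u y /\ forall (D : K -> R) e, (forall z, 0 <= D z) -> 0 <= e ->
   (forall a b, edge W a b -> D a <= A a b * (D b + e / rho b)) -> D u <= C u y * (D y + e).
  have H1 : forall u, exists f : K -> R, forall y, 0 <= f y /\ forall (D : K -> R) e, (forall z, 0 <= D z) -> 0 <= e ->
   (forall a b, edge W a b -> D a <= A a b * (D b + e / rho b)) -> D u <= f y * (D y + e).
    move=> u; exact: (fin_all_exists (Hex u)).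
  exact: (fin_all_exists H1).
pose Cs := \big[Rplus/0]_(u : K) \big[Rplus/0]_(y : K) C u y.
have HCs : forall u y, C u y <= Cs.
  move=> u y; apply: Rle_trans (@term_le_sum K u (fun _ => true) _ _ _).
  - exact: (@term_le_sum K y (fun _ => true) (C u) (fun i _ => proj1 (HC u i))).
  - move=> i _; apply: sum_ge0 => j _; exact: (proj1 (HC i j)).
  - done.
exists Cs; split.
  by apply: sum_ge0 => i _; apply: sum_ge0 => j _; exact: (proj1 (HC i j)).
move=> t W' p Ht HW' Hs' x.
have [Hp0 [Hp1 _]] := Hs'.
have Htp : 0 < t by lra.
set e := 1 - / (t * t).
have He : 0 <= e.
  rewrite /e; have : / (t * t) <= 1; last lra.
  rewrite -Rinv_1; apply: Rinv_le_contravar; nra.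
pose r u := p u / rho u.
have Hpr : forall u, p u = rho u * r u.
  by move=> u; rewrite /r; field; have := Hpos u; lra.
have [y0 Hy0] := argmax r x.
pose D z := r y0 - r z.
have HD : forall z, 0 <= D z by move=> z; rewrite /D; have := Hy0 z; lra.
have Hedge : forall a b, edge W a b -> D a <= A a b * (D b + e / rho b).
  move=> a b [Hab HWab].
  have Hp := balance Hs' b.
  have Hr := balance Hs b.
  have Hrb : 0 < rho b := Hpos b.
  have Hra : 0 < rho a := Hpos a.
  set T := \big[Rplus/0]_(u in predC1 b) W b u in Hr.
  set T' := \big[Rplus/0]_(u in predC1 b) W' b u in Hp.
  set Q := \big[Rplus/0]_(u in predC1 b) (rho u * W u b * D u).
  have Hi : \big[Rplus/0]_(u in predC1 b) (p u * W' u b) <=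
            t * \big[Rplus/0]_(u in predC1 b) (p u * W u b).
    rewrite -sum_mull; apply: sum_le => u; rewrite inE => /eqP Hu.
    have := proj2 (HW' u b Hu); have := Hp0 u; nra.
  have Hii : \big[Rplus/0]_(u in predC1 b) (p u * W u b) = r y0 * S b - Q.
    rewrite /S -sum_mull /Q -sum_sub; apply: eq_bigr => u _; rewrite Hpr /D; ring.
  have Hiii : T / t <= T'.
    rewrite /T /T' /Rdiv big_distrl /=; apply: sum_le => u; rewrite inE => /eqP Hu.
    exact: (proj1 (HW' b u (nesym Hu))).
  have Hiv : rho a * W a b * D a <= Q.
    apply: (@term_le_sum K a (fun v => v \in predC1 b) (fun u => rho u * W u b * D u)).
    - move=> i; rewrite inE => /eqP Hi'; apply: Rmult_le_pos; last exact: HD.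
      apply: Rmult_le_pos; [have := Hpos i; lra | exact: HW].
    - exact: in_predC1.
  have HrbT : p b * (T / t) = r b * S b / t.
    rewrite /S Hr Hpr; field; lra.
  have Hpb : 0 <= p b := Hp0 b.
  have H1 : r b * S b / t <= t * (r y0 * S b - Q).
    rewrite -HrbT -Hii; apply: Rle_trans Hi; rewrite Hp.
    exact: Rmult_le_compat_l.
  have H2 : r b * S b / (t * t) <= r y0 * S b - Q.
    have -> : r b * S b / (t * t) = (r b * S b / t) * / t by field; lra.
    have -> : r y0 * S b - Q = t * (r y0 * S b - Q) * / t by field; lra.
    apply: Rmult_le_compat_r => //; apply: Rlt_le; exact: Rinv_0_lt_compat.
  have H3 : r b <= / rho b.
    rewrite /r /Rdiv; have := sum1 b Hp0 Hp1; have := Rinv_0_lt_compat _ Hrb; nra.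
  have H4 : rho a * W a b * D a <= S b * (D b + e / rho b).
    apply: (Rle_trans _ _ _ Hiv); have H2' : Q <= r y0 * S b - r b * S b / (t * t) by lra.
    apply: (Rle_trans _ _ _ H2').
    have -> : r y0 * S b - r b * S b / (t * t) = S b * (D b + r b * e)
      by rewrite /D /e; field; lra.
    apply: Rmult_le_compat_l; first exact: HS.
    rewrite /Rdiv; have := Rmult_le_compat_r e _ _ He H3; lra.
  have Hden : 0 < rho a * W a b by nra.
  apply: (Rmult_le_reg_l (rho a * W a b)) => //.
  have -> : rho a * W a b * (A a b * (D b + e / rho b)) = S b * (D b + e / rho b)
    by rewrite /A; field; lra.
  exact: H4.
have HDb : forall z, D z <= Cs * e.
  move=> z; have := (proj2 (HC z y0)) D e HD He Hedge.
  have -> : D y0 = 0 by rewrite /D; ring.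
  have := HCs z y0; nra.
have [Hr0 [Hr1 _]] := Hs.
have Hsum : \big[Rplus/0]_(u : K) (rho u * r u) = 1.
  by rewrite -Hp1 /sumK; apply: eq_bigr => u _; rewrite Hpr.
have Hup : \big[Rplus/0]_(u : K) (rho u * r u) <= r y0.
  have -> : r y0 = \big[Rplus/0]_(u : K) (rho u * r y0).
    by rewrite -big_distrl /=; change (\big[Rplus/0]_(u : K) rho u) with (sumK rho); rewrite Hr1; ring.
  apply: sum_le => u _; apply: Rmult_le_compat_l; [exact: Hr0 | exact: Hy0].
have Hlo : r y0 - Cs * e <= \big[Rplus/0]_(u : K) (rho u * r u).
  have -> : r y0 - Cs * e = \big[Rplus/0]_(u : K) (rho u * (r y0 - Cs * e)).
    by rewrite -big_distrl /=; change (\big[Rplus/0]_(u : K) rho u) with (sumK rho); rewrite Hr1; ring.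
  apply: sum_le => u _; apply: Rmult_le_compat_l; first exact: Hr0.
  have := HDb u; rewrite /D; lra.
have Hx1 : Rabs (r x - 1) <= Cs * e.
  apply: Rabs_le; have := HDb x; have := HD x; rewrite /D; lra.
have -> : p x - rho x = rho x * (r x - 1) by rewrite Hpr; ring.
rewrite Rabs_mult Rabs_right; last by have := Hr0 x; lra.
have := sum1 x Hr0 Hr1; have := Hr0 x; have : 0 <= Cs * e.
  by apply: Rle_trans (HDb x); exact: HD.
have := Rabs_pos (r x - 1). nra.
Qed.

Definition lim0 (f : R -> R) (l : R) :=
  forall eps, 0 < eps -> exists del, 0 < del /\ forall h, Rabs h < del -> Rabs (f h - l) < eps.

Lemma cont_lim0 f : continuity_pt f 0 -> lim0 f (f 0).
Proof.
move=> Hc eps He; have [del [Hd H]] := Hc eps He; exists del; split => // h Hh.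
case: (Req_dec h 0) => [->|Hn]; first by rewrite Rminus_diag Rabs_R0.
have := H h; rewrite /D_x /no_cond /= /R_dist Rminus_0_r; apply; exact: (conj (conj I (nesym Hn)) Hh).
Qed.

Lemma lim0_cont f : lim0 f (f 0) -> continuity_pt f 0.
Proof.
move=> Hc eps He; have [del [Hd H]] := Hc eps He; exists del; split => // h [_ Hh].
move: Hh; rewrite /= /R_dist Rminus_0_r; exact: H.
Qed.

Lemma cont_deriv (g : R -> R) : continuity_pt g 0 ->
  derivable_pt_lim (fun h => h * g h) 0 (g 0).
Proof.
move=> /cont_lim0 Hc eps He; have [del [Hd H]] := Hc eps He.
exists (mkposreal del Hd) => h Hh Hhd /=.
have -> : ((0 + h) * g (0 + h) - 0 * g 0) / h = g h.
  by rewrite Rplus_0_l; field.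
exact: H.
Qed.

Lemma cont_sum (I : Type) (r : seq I) (P : pred I) (F : I -> R -> R) :
  (forall i, P i -> continuity_pt (F i) 0) ->
  continuity_pt (fun h => \big[Rplus/0]_(i <- r | P i) F i h) 0.
Proof.
move=> H; elim: r => [|a r IH].
  have -> : (fun h => \big[Rplus/0]_(i <- [::] | P i) F i h) = fun _ => 0.
    by apply: functional_extensionality => h; rewrite big_nil.
  exact: continuity_pt_const.
case Pa: (P a).
  have -> : (fun h => \big[Rplus/0]_(i <- a :: r | P i) F i h) =
     fun h => F a h + \big[Rplus/0]_(i <- r | P i) F i h.
    by apply: functional_extensionality => h; rewrite big_cons Pa.
  exact: (continuity_pt_plus _ _ _ (H a Pa) IH).
have -> : (fun h => \big[Rplus/0]_(i <- a :: r | P i) F i h) =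
   fun h => \big[Rplus/0]_(i <- r | P i) F i h.
  by apply: functional_extensionality => h; rewrite big_cons Pa.
exact: IH.
Qed.

Lemma cont_mul (f g : R -> R) : continuity_pt f 0 -> continuity_pt g 0 ->
  continuity_pt (fun h => f h * g h) 0.
Proof. exact: continuity_pt_mult. Qed.

Lemma cont_const (a : R) : continuity_pt (fun _ => a) 0.
Proof. exact: (continuity_pt_const (fun _ => a) 0 (fun x y => erefl)). Qed.

Definition phi (t : R) : R := if Req_EM_T t 0 then 1 else (exp t - 1) / t.

Lemma phi_cont : continuity_pt phi 0.
Proof.
apply: lim0_cont => eps He.
have [del Hd] := derivable_pt_lim_exp_0 eps He.
exists del; split; first exact: cond_pos.
move=> h Hh; rewrite /phi; destruct (Req_EM_T 0 0) as [e0|F]; last lra.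
destruct (Req_EM_T h 0) as [E|Hn]; first by rewrite Rminus_diag Rabs_R0.
have := Hd h Hn Hh; rewrite Rplus_0_l exp_0; done.
Qed.

Lemma lin_cont (s : R) : continuity_pt (fun h => h * s) 0.
Proof.
apply: lim0_cont => eps He; exists (eps / (Rabs s + 1)); split.
  by apply: Rdiv_lt_0_compat => //; have := Rabs_pos s; lra.
move=> h Hh; rewrite Rmult_0_l Rminus_0_r Rabs_mult.
have Hs := Rabs_pos s.
have Hh' : Rabs h * (Rabs s + 1) < eps.
  move: Hh; rewrite /Rdiv => Hh.
  have := Rmult_lt_compat_r (Rabs s + 1) _ _ (ltac:(lra)) Hh.
  by rewrite Rmult_assoc Rinv_l ?Rmult_1_r //; lra.
have := Rabs_pos h; nra.
Qed.

Lemma phi_lin_cont (s : R) : continuity_pt (fun h => phi (h * s)) 0.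
Proof.
apply: (continuity_pt_comp (fun h => h * s) phi 0 (lin_cont s)).
rewrite Rmult_0_l; exact: phi_cont.
Qed.

Lemma phi_id (W s h : R) : W - W * exp (h * s) = h * (W * (- s * phi (h * s))).
Proof.
rewrite /phi; destruct (Req_EM_T (h * s) 0) as [E|Hn].
  rewrite /=. have H1 : exp (h * s) = 1 by rewrite E exp_0.
  rewrite H1. have E2 : h * (- s) = 0 by lra.
  replace (h * (W * (- s * 1))) with (W * (h * - s)) by ring. rewrite E2; ring.
have Hh : h <> 0 by move=> H0; apply: Hn; rewrite H0; ring.
have Hs : s <> 0 by move=> H0; apply: Hn; rewrite H0; ring.
rewrite /=; field; split => //.
Qed.

Lemma exp_le (x y : R) : x <= y -> exp x <= exp y.
Proof.
case/Rle_lt_or_eq_dec => [H|->]; [apply: Rlt_le; exact: exp_increasing | lra].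
Qed.

Definition Bnd (K : finType) (c d : R) (F : K -> R) : R :=
  \big[Rplus/0]_(x : K) \big[Rplus/0]_(y : K) Rabs (c * F y - d * F x).

Lemma pert_bound (K : finType) (W : K -> K -> R) c d (F : K -> R) h :
  rates W -> forall x y, x <> y ->
  W x y / exp (Rabs h * Bnd c d F) <= pert W c d F h x y <= exp (Rabs h * Bnd c d F) * W x y.
Proof.
move=> HW x y Hxy.
have Hs : Rabs (c * F y - d * F x) <= Bnd c d F.
  apply: Rle_trans (@term_le_sum K x (fun _ => true) _ _ _).
  - exact: (@term_le_sum K y (fun _ => true) (fun y => Rabs (c * F y - d * F x)) (fun i _ => Rabs_pos _)).
  - by move=> i _; apply: sum_ge0 => j _; exact: Rabs_pos.
  - done.
have Hh : Rabs (h * (c * F y - d * F x)) <= Rabs h * Bnd c d F.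
  rewrite Rabs_mult; apply: Rmult_le_compat_l => //; exact: Rabs_pos.
have A1 := Rle_abs (h * (c * F y - d * F x)).
have A2 := Rle_abs (- (h * (c * F y - d * F x))); rewrite Rabs_Ropp in A2.
have HW0 := HW x y Hxy.
rewrite /pert; split.
- rewrite /Rdiv -exp_Ropp; apply: Rmult_le_compat_l => //; apply: exp_le; lra.
- rewrite [X in _ <= X]Rmult_comm; apply: Rmult_le_compat_l => //; apply: exp_le; lra.
Qed.

Lemma alg (K : finType) (W : K -> K -> R) (rho : K -> R) c d (F G : K -> R) :
  stationary W rho ->
  \big[Rplus/0]_(x : K) (rho x * \big[Rplus/0]_(y in predC1 x)
      (W x y * (- (c * F y - d * F x) * 1) * (G y - G x)))
  = c * expect rho (fun x => G x * gen W F x) + d * expect rho (fun x => F x * gen W G x).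
Proof.
move=> Hs.
have Z := stat_gen Hs (fun z => F z * G z).
transitivity (c * expect rho (fun x => G x * gen W F x) + d * expect rho (fun x => F x * gen W G x)
   - c * sumK (fun x => rho x * gen W (fun z => F z * G z) x)); last by rewrite Z; ring.
rewrite /expect /sumK -!sum_mull -big_split /= -sum_sub.
apply: eq_bigr => x _; rewrite /gen -!sum_mull -big_split /= -sum_sub.
apply: eq_bigr => y _; ring.
Qed.

Lemma phi0 : phi 0 = 1.
Proof. rewrite /phi; destruct (Req_EM_T 0 0) as [e|F]; [done | lra]. Qed.

Lemma main1 (K : finType) (W : K -> K -> R) (rho : K -> R) c d (F G : K -> R) (p : R -> K -> R) :
  rates W -> irreducible W -> stationary W rho ->
  (forall h, stationary (pert W c d F h) (p h)) ->
  derivable_pt_lim (fun h => sumK (fun x => p h x * gen W G x)) 0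
    (c * expect rho (fun x => G x * gen W F x) + d * expect rho (fun x => F x * gen W G x)).
Proof.
move=> HW Hirr Hs Hsh.
have [Cs [HCs Hst]] := stab HW Hirr Hs.
pose B := Bnd c d F.
have HB : 0 <= B by apply: sum_ge0 => i _; apply: sum_ge0 => j _; exact: Rabs_pos.
pose t h := exp (Rabs h * B).
pose e h := 1 - / (t h * t h).
have Hbound : forall h x, Rabs (p h x - rho x) <= Cs * e h.
  move=> h; apply: Hst (Hsh h).
  - rewrite /t -exp_0; apply: exp_le; have := Rabs_pos h; nra.
  - move=> x y Hxy; exact: pert_bound.
have He_cont : continuity_pt e 0.
  have H1 : continuity_pt (fun h => Rabs h * B) 0 := cont_mul (Rcontinuity_abs 0) (cont_const B).
  have H2 : continuity_pt t 0.
    apply: (continuity_pt_comp (fun h => Rabs h * B) exp 0 H1).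
    exact: derivable_continuous_pt (derivable_pt_exp _).
  apply: (continuity_pt_minus (fun _ => 1) _ 0 (cont_const 1)).
  apply: continuity_pt_inv; first exact: (cont_mul H2 H2).
  have := exp_pos (Rabs 0 * B); rewrite /t; nra.
have e0 : e 0 = 0 by rewrite /e /t Rabs_R0 Rmult_0_l exp_0; field.
have H0 : forall x, p 0 x = rho x.
  move=> x; have := Hbound 0 x; rewrite e0 Rmult_0_r => H.
  have := Rle_abs (p 0 x - rho x); have := Rle_abs (- (p 0 x - rho x)); rewrite Rabs_Ropp; lra.
have Hpc : forall x, continuity_pt (fun h => p h x) 0.
  move=> x; apply: lim0_cont; rewrite H0 => eps Heps.
  have Hq : 0 < eps / (Cs + 1) by apply: Rdiv_lt_0_compat; lra.
  have [del [Hd Hdel]] := cont_lim0 He_cont Hq.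
  exists del; split => // h Hh.
  have := Hdel h Hh; rewrite e0 Rminus_0_r => H1.
  have := Hbound h x; have := Rle_abs (e h).
  have : eps / (Cs + 1) * (Cs + 1) = eps by field; lra.
  nra.
pose s (x y : K) := c * F y - d * F x.
pose g h := \big[Rplus/0]_(x : K) (p h x * \big[Rplus/0]_(y in predC1 x)
      (W x y * (- s x y * phi (h * s x y)) * (G y - G x))).
have Hfg : (fun h => sumK (fun x => p h x * gen W G x)) = fun h => h * g h.
  apply: functional_extensionality => h.
  have Z := stat_gen (Hsh h) G.
  rewrite -[LHS]Rminus_0_r -Z /sumK -sum_sub /g -sum_mull; apply: eq_bigr => x _.
  rewrite /gen -Rmult_minus_distr_l -sum_sub -[in RHS]sum_mull -[in RHS]sum_mull -sum_mull.
  apply: eq_bigr => y _.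
  have E := phi_id (W x y) (s x y) h.
  rewrite /pert -/(s x y).
  transitivity (p h x * (G y - G x) * (W x y - W x y * exp (h * s x y))); first ring.
  rewrite E; ring.
have Hgc : continuity_pt g 0.
  rewrite /g; apply: cont_sum => x _; apply: cont_mul; first exact: Hpc.
  apply: cont_sum => y _; apply: cont_mul; last exact: cont_const.
  apply: cont_mul; first exact: cont_const.
  apply: cont_mul; [exact: cont_const | exact: phi_lin_cont].
rewrite Hfg.
have -> : c * expect rho (fun x => G x * gen W F x) + d * expect rho (fun x => F x * gen W G x) = g 0.
  rewrite -(alg c d F G Hs) /g; apply: eq_bigr => x _; rewrite H0; congr (_ * _).
  by apply: eq_bigr => y _; rewrite Rmult_0_l phi0.
exact: cont_deriv.
Qed.

Theorem proposition2 (K : finType) (W : K -> K -> R) (rho : K -> R)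
  (V M : K -> R) (a b : R) (rhoV rhoM : R -> K -> R) :
  rates W -> irreducible W -> stationary W rho ->
  (forall h, stationary (pert W b a V h) (rhoV h)) ->
  (forall h, stationary (pert W a b M h) (rhoM h)) ->
  let chi := b * expect rho (fun x => M x * gen W V x)
             + a * expect rho (fun x => V x * gen W M x) in
  derivable_pt_lim (fun h => sumK (fun x => rhoV h x * gen W M x)) 0 chi /\
  derivable_pt_lim (fun h => sumK (fun x => rhoM h x * gen W V x)) 0 chi.
Proof.
move=> HW Hirr Hs HV HM chi; split.
- exact: (@main1 K W rho b a V M rhoV HW Hirr Hs HV).
- rewrite /chi Rplus_comm; exact: (@main1 K W rho a b M V rhoM HW Hirr Hs HM).
Qed.
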